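(* Let $d>1$ and $1\le d_1\le d$ be integers, let $C>0$, and let $B>5+\log_2 C$. For an integer $k\ge1$ put $n=2^k$, $s_j=n/2^{j-1}$, and for $1\le i\le k$ put $$j_0=j_0(i)=\tfrac1d\log n+\big(1-\tfrac{d_1}{d}\big)(i-1)-\big(1+\tfrac1d\big)\log\log n-B,$$ and for a constant $A>0$ and $i-1\le j\le k$ put $$\Delta_j^i=A\,\frac{1}{(1+|j-j_0|)^2}\cdot\frac{n^{1/2-1/(2d)}}{2^{(1/2-d_1/(2d))(i-1)}}\cdot\log^{1/2+1/(2d)}n .$$ Then there is $A_0>0$ depending only on $d$, $C$ and $B$ such that for every $A\ge A_0$ and every $k\ge1$, $$\sum_{i=1}^{k}\sum_{j=i-1}^{k}C\cdot\frac{j^d\,2^{jd}}{2^{(d-d_1)(i-1)}}\exp\!\Big(-\frac{(\Delta_j^i)^2}{16\,s_j}\Big)\le\frac{n}{16}.$$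
   Context: $\log$ denotes the base-2 logarithm and $\exp$ the natural exponential. *)

(* Defs.v *)
From Stdlib Require Import Reals List.
Open Scope R_scope.

Definition log2 (x : R) : R := ln x / ln 2.

(** sumR a b f = f a + f (a+1) + ... + f b  (empty if b < a) *)
Definition sumR (a b : nat) (f : nat -> R) : R :=
  fold_right (fun i acc => f i + acc) 0 (List.seq a (S b - a)).

Definition nn (k : nat) : R := 2 ^ k.

Definition s_ (k j : nat) : R := nn k / Rpower 2 (INR j - 1).

Definition j0 (d d1 : nat) (B : R) (k i : nat) : R :=
  / INR d * log2 (nn k) + (1 - INR d1 / INR d) * (INR i - 1)
  - (1 + / INR d) * log2 (log2 (nn k)) - B.

Definition Delta (d d1 : nat) (A B : R) (k i j : nat) : R :=
  A * (1 / (1 + Rabs (INR j - j0 d d1 B k i)) ^ 2)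
    * (Rpower (nn k) (1/2 - 1 / (2 * INR d))
       / Rpower 2 ((1/2 - INR d1 / (2 * INR d)) * (INR i - 1)))
    * Rpower (log2 (nn k)) (1/2 + 1 / (2 * INR d)).

Definition term (d d1 : nat) (C A B : R) (k i j : nat) : R :=
  C * (INR j ^ d * 2 ^ (j * d) / 2 ^ ((d - d1) * (i - 1)))
    * exp (- (Delta d d1 A B k i j ^ 2 / (16 * s_ k j))).

(* Main.v *)
Require Import Defs.
From Stdlib Require Import Reals List.
From Stdlib Require Import Lra Lia Psatz.
Open Scope R_scope.


Lemma exp_le_m x y : x <= y -> exp x <= exp y.
Proof. intros [H|H]; [left; apply exp_increasing; exact H| subst; lra]. Qed.

Lemma exp_le_1 x : x <= 0 -> exp x <= 1.
Proof. intros H. rewrite <- exp_0. apply exp_le_m; exact H. Qed.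

Lemma ln_le_m x y : 0 < x -> x <= y -> ln x <= ln y.
Proof. intros Hx [H|H]; [left; apply ln_increasing; lra| subst; lra]. Qed.

Lemma le_div x y P : 0 < P -> x * P <= y -> x <= y / P.
Proof. intros HP H. apply (Rmult_le_reg_r P); auto. unfold Rdiv.
  rewrite Rmult_assoc, Rinv_l; lra. Qed.

Lemma div_le x y P : 0 < P -> x <= y * P -> x / P <= y.
Proof. intros HP H. apply (Rmult_le_reg_r P); auto. unfold Rdiv.
  rewrite Rmult_assoc, Rinv_l; lra. Qed.

Lemma div_le_inv x y P : 0 < P -> x / P <= y -> x <= y * P.
Proof. intros HP H. replace x with (x / P * P) by (field; lra).
  apply Rmult_le_compat_r; lra. Qed.

Lemma ln2_pos : 0 < ln 2.
Proof. pose proof ln_lt_2; lra. Qed.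

Lemma ln2_lt1 : ln 2 < 1.
Proof. rewrite <- (ln_exp 1). apply ln_increasing; [lra|].
  pose proof (exp_ineq1 1 ltac:(lra)). lra. Qed.

Lemma exp_5 x : exp x = exp (x/5) ^ 5.
Proof. simpl. rewrite Rmult_1_r, <- !exp_plus. f_equal. field. Qed.

Lemma Fbound (d : nat) (eps : R) : (2 <= d)%nat -> 0 < eps ->
  exists a0, 0 < a0 /\ forall a t, a0 <= a ->
    exp (INR d * t * ln 2) * exp (- (a * exp (t * ln 2) / (1 + Rabs t) ^ 4))
    <= eps * (exp (t * ln 2) / ((1 + 2 * exp (t * ln 2)) * (1 + exp (t * ln 2)))).
Proof.
  intros Hd He.
  pose proof ln2_pos as L2. pose proof ln2_lt1 as L21.
  set (δ := Rmin 1 (eps/6)).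
  assert (Hδ1 : δ <= 1) by apply Rmin_l.
  assert (Hδe : δ <= eps/6) by apply Rmin_r.
  assert (Hδ0 : 0 < δ) by (apply Rmin_glb_lt; lra).
  assert (Hδ2 : 0 < eps * δ^2) by (apply Rmult_lt_0_compat; [lra| apply pow_lt; lra]).
  set (M := - ln δ / ln 2).
  assert (HM : 0 <= M).
  { unfold M. assert (ln δ <= 0). { rewrite <- ln_1. apply ln_le_m; lra. }
    unfold Rdiv. apply Rmult_le_pos; [lra| left; apply Rinv_0_lt_compat; lra]. }
  set (c := ln 2 / 5).
  assert (Hc0 : 0 < c) by (unfold c; lra).
  assert (Hc1 : c <= 1) by (unfold c; lra).
  assert (Hd' : 2 <= INR d) by (replace 2 with (INR 2) by (simpl; lra); apply le_INR; lia).
  assert (HM4 : 0 < (1+M)^4) by (apply pow_lt; lra).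
  assert (Hc5 : 0 < c^5) by (apply pow_lt; lra).
  set (X1 := 6 * (1+M)^4 / (eps * δ^2)).
  set (X2 := ((INR d + 1) * ln 2 + Rabs (ln (eps/6))) / c^5).
  assert (HX1 : 0 <= X1).
  { unfold X1. apply Rlt_le. apply Rdiv_lt_0_compat; [lra|]. apply Rmult_lt_0_compat; [lra|]. nra. }
  assert (HX2 : 0 <= X2).
  { unfold X2. apply Rlt_le. apply Rdiv_lt_0_compat; [|lra]. pose proof (Rabs_pos (ln (eps/6))). nra. }
  exists (1 + X1 + X2). split; [lra|].
  intros a t Ha.
  set (u := exp (t * ln 2)).
  assert (Hu : 0 < u) by apply exp_pos.
  assert (Hlu : ln u = t * ln 2) by apply ln_exp.
  assert (Ha0 : 0 < a) by lra.
  assert (Hden : 0 < (1 + 2*u) * (1+u)) by nra.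
  assert (Hpt : 0 < (1 + Rabs t)^4) by (apply pow_lt; pose proof (Rabs_pos t); lra).
  assert (HX : 0 <= a * u / (1 + Rabs t)^4).
  { apply Rlt_le. apply Rdiv_lt_0_compat; nra. }
  destruct (Rle_dec u 1) as [Hu1|Hu1].
  -
    assert (Ht : t <= 0).
    { assert (ln u <= 0) by (rewrite <- ln_1; apply ln_le_m; lra). nra. }
    assert (Hdt : exp (INR d * t * ln 2) <= u * u).
    { replace (INR d * t * ln 2) with (t * ln 2 + t * ln 2 + (INR d - 2) * t * ln 2) by ring.
      rewrite !exp_plus. fold u.
      assert (exp ((INR d - 2) * t * ln 2) <= 1).
      { apply exp_le_1. assert (0 <= (INR d - 2) * (-t)) by nra. nra. }
      assert (0 < exp ((INR d - 2) * t * ln 2)) by apply exp_pos. nra. }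
    destruct (Rle_dec u δ) as [Huδ|Huδ].
    + assert (exp (- (a * u / (1 + Rabs t) ^ 4)) <= 1).
      { apply exp_le_1. lra. }
      assert (0 < exp (- (a * u / (1 + Rabs t) ^ 4))) by apply exp_pos.
      assert (0 < exp (INR d * t * ln 2)) by apply exp_pos.
      apply Rle_trans with (u*u).
      { apply Rle_trans with (exp (INR d * t * ln 2) * 1).
        apply Rmult_le_compat_l; lra. lra. }
      unfold Rdiv. rewrite <- Rmult_assoc. apply le_div; [exact Hden|].
      assert ((1 + 2*u)*(1+u) <= 6) by nra.
      assert (u * u * ((1 + 2 * u) * (1 + u)) <= u*u*6) by nra.
      nra.
    + assert (Huδ' : δ < u) by lra.
      assert (Htm : - t <= M).
      { unfold M. assert (ln δ < ln u) by (apply ln_increasing; lra).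
        apply le_div; [lra|]. nra. }
      assert (Hat : Rabs t = - t) by (apply Rabs_left1; lra).
      assert (Hp4 : (1 + Rabs t)^4 <= (1+M)^4).
      { apply pow_incr. split; [pose proof (Rabs_pos t); lra| lra]. }
      set (X := a * u / (1 + Rabs t) ^ 4).
      assert (HXl : a * δ / (1+M)^4 <= X).
      { unfold X. apply le_div; [lra|]. 
        replace (a*δ/(1+M)^4*(1+Rabs t)^4) with (a*δ*(/(1+M)^4*(1+Rabs t)^4)) by (unfold Rdiv; ring).
        assert (/ (1+M)^4 * (1 + Rabs t)^4 <= 1).
        { apply Rmult_le_reg_l with ((1+M)^4); [lra|]. rewrite <- Rmult_assoc, Rinv_r; lra. }
        assert (0 < / (1+M)^4) by (apply Rinv_0_lt_compat; lra).
        assert (0 <= / (1+M)^4 * (1 + Rabs t)^4) by nra.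
        assert (0 < a * δ) by nra.
        apply Rle_trans with (a*δ). 2:{ nra. }
        rewrite <- (Rmult_1_r (a*δ)) at 2. apply Rmult_le_compat_l; lra. }
      assert (HaX1 : X1 <= a) by lra.
      assert (Hpos : 0 < a * δ / (1+M)^4) by (apply Rdiv_lt_0_compat; nra).
      assert (HeX : exp (- X) <= / X).
      { rewrite exp_Ropp. apply Rinv_le_contravar; [lra|].
        pose proof (exp_ineq1_le X). lra. }
      assert (HiX : / X <= (1+M)^4 / (a * δ)).
      { apply Rle_trans with (/ (a * δ / (1+M)^4)).
        - apply Rinv_le_contravar; lra.
        - right. field. split; lra. }
      assert (HXb : (1+M)^4 / (a * δ) <= eps * δ / 6).
      { apply div_le; [nra|].
        unfold X1 in HaX1.
        assert (6 * (1 + M) ^ 4 <= a * (eps * δ^2)).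
        { apply div_le_inv; [lra|]. exact HaX1. }
        nra. }
      assert (Hdt1 : exp (INR d * t * ln 2) <= 1) by nra.
      assert (0 < exp (INR d * t * ln 2)) by apply exp_pos.
      assert (0 < exp (-X)) by apply exp_pos.
      apply Rle_trans with (eps * δ / 6). { nra. }
      unfold Rdiv. rewrite <- Rmult_assoc. apply le_div; [exact Hden|].
      assert ((1 + 2*u)*(1+u) <= 6) by nra.
      nra.
  -
    assert (Hu1' : 1 < u) by lra.
    assert (Ht : 0 < t).
    { assert (0 < ln u) by (rewrite <- ln_1; apply ln_increasing; lra). nra. }
    assert (Hat : Rabs t = t) by (apply Rabs_right; lra).
    rewrite Hat in *.
    assert (Hu5 : (c * (1+t))^5 <= u).
    { unfold u. rewrite exp_5. apply pow_incr. split. nra.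
      apply Rle_trans with (1 + t * ln 2 / 5). unfold c. nra. apply exp_ineq1_le. }
    set (X := a * u / (1 + t) ^ 4).
    assert (HXl : a * c^5 * (1 + t) <= X).
    { unfold X. apply le_div; [lra|].
      replace (a * c ^ 5 * (1 + t) * (1 + t) ^ 4) with (a * (c * (1+t))^5) by ring. nra. }
    assert (HL := Rabs_pos (ln (eps/6))).
    assert (HaX2 : X2 <= a) by lra.
    assert (Hac : (INR d + 1) * ln 2 + Rabs (ln (eps/6)) <= a * c^5).
    { unfold X2 in HaX2. apply div_le_inv; [lra|]. exact HaX2. }
    assert (Hexp : INR d * t * ln 2 - X <= ln (eps/6) - t * ln 2).
    { pose proof (Rle_abs (- ln (eps/6))). rewrite Rabs_Ropp in H. nra. }
    apply Rle_trans with (exp (ln (eps/6) - t * ln 2)).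
    { rewrite <- exp_plus. apply exp_le_m. fold X. lra. }
    unfold Rminus. rewrite exp_plus, exp_ln by lra. rewrite exp_Ropp. fold u.
    unfold Rdiv. rewrite <- Rmult_assoc. apply le_div; [exact Hden|].
    apply Rmult_le_reg_r with u; [lra|].
    replace (eps * / 6 * / u * ((1 + 2 * u) * (1 + u)) * u) with (eps / 6 * ((1 + 2 * u) * (1 + u))) by (field; lra).
    assert ((1 + 2 * u) * (1 + u) <= 6 * (u*u)) by nra.
    nra.
Qed.

Lemma pow2_exp n : 2 ^ n = exp (INR n * ln 2).
Proof. rewrite <- Rpower_pow by lra. reflexivity. Qed.

Lemma exp_div x y : exp x / exp y = exp (x - y).
Proof. unfold Rminus. rewrite exp_plus, exp_Ropp. reflexivity. Qed.

Lemma log2_nn k : log2 (nn k) = INR k.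
Proof. unfold log2, nn. rewrite ln_pow by lra. field. pose proof ln2_pos; lra. Qed.

Lemma term_bound d d1 C A B k i j :
  (1 < d)%nat -> 0 < C -> (1 <= d1 <= d)%nat -> (1 <= k)%nat ->
  (1 <= i <= k)%nat -> (i - 1 <= j <= k)%nat ->
  let t := INR j - j0 d d1 B k i in
  let a := A ^ 2 / 16 * exp (- (B + 1) * ln 2) in
  term d d1 C A B k i j <=
  C * exp (- INR d * B * ln 2) * nn k / INR k *
    (exp (INR d * t * ln 2) * exp (- (a * exp (t * ln 2) / (1 + Rabs t) ^ 4))).
Proof.
  intros Hd HC Hd1 Hk Hi Hj t a.
  pose proof ln2_pos as L2.
  assert (HK : 1 <= INR k) by (replace 1 with (INR 1) by reflexivity; apply le_INR; lia).
  assert (HD : 2 <= INR d) by (replace 2 with (INR 2) by (simpl; lra); apply le_INR; lia).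
  assert (HJK : INR j <= INR k) by (apply le_INR; lia).
  assert (HJ0 : 0 <= INR j) by apply pos_INR.
  assert (nnE : nn k = exp (INR k * ln 2)) by (unfold nn; apply pow2_exp).
  assert (lnn : ln (nn k) = INR k * ln 2) by (rewrite nnE; apply ln_exp).
  assert (tE : t * ln 2 = INR j * ln 2 - / INR d * INR k * ln 2 - (1 - INR d1 / INR d) * (INR i - 1) * ln 2
                + (1 + / INR d) * ln (INR k) + B * ln 2).
  { unfold t, j0. rewrite log2_nn. unfold log2 at 1. field. split; lra. }
  assert (E2 : Defs.Delta d d1 A B k i j ^ 2 / (16 * s_ k j) = a * exp (t * ln 2) / (1 + Rabs t) ^ 4).
  { unfold Defs.Delta, s_, a. fold t. rewrite log2_nn. unfold Rpower. rewrite lnn.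
    assert (Hpt : 0 < 1 + Rabs t) by (pose proof (Rabs_pos t); lra).
    rewrite nnE.
    set (X1 := (1 / 2 - 1 / (2 * INR d)) * (INR k * ln 2)).
    set (X2 := (1 / 2 - INR d1 / (2 * INR d)) * (INR i - 1) * ln 2).
    set (X3 := (1 / 2 + 1 / (2 * INR d)) * ln (INR k)).
    set (Y1 := INR k * ln 2). set (Y2 := (INR j - 1) * ln 2).
    assert (0 < exp X1) by apply exp_pos. assert (0 < exp X2) by apply exp_pos.
    assert (0 < exp X3) by apply exp_pos. assert (0 < exp Y1) by apply exp_pos.
    assert (0 < exp Y2) by apply exp_pos.
    transitivity (A^2/16/(1+Rabs t)^4 * (exp (X1 - X2 + X3) * exp (X1 - X2 + X3) * exp Y2 / exp Y1)).
    { rewrite !exp_plus, <- !exp_div. field. repeat split; lra. }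
    rewrite <- !exp_plus, exp_div.
    replace (X1 - X2 + X3 + (X1 - X2 + X3) + Y2 - Y1) with (- (B + 1) * ln 2 + t * ln 2).
    { rewrite exp_plus. field. lra. }
    rewrite tE. unfold X1, X2, X3, Y1, Y2. field. lra. }
  assert (E3 : 2 ^ (j * d) / 2 ^ ((d - d1) * (i - 1)) =
     exp (INR d * t * ln 2) * nn k * exp (- (INR d + 1) * ln (INR k)) * exp (- INR d * B * ln 2)).
  { rewrite !pow2_exp, exp_div, <- !exp_plus. f_equal.
    rewrite !mult_INR, !minus_INR by lia.
    replace (INR d * t * ln 2) with (INR d * (t * ln 2)) by ring. rewrite tE. simpl INR. field. lra. }
  unfold term. rewrite E2. replace (INR j ^ d * 2 ^ (j * d) / 2 ^ ((d - d1) * (i - 1))) with (INR j ^ d * (2 ^ (j * d) / 2 ^ ((d - d1) * (i - 1)))) by (unfold Rdiv; ring). rewrite E3.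
  set (E := exp (- (a * exp (t * ln 2) / (1 + Rabs t) ^ 4))).
  assert (0 < E) by apply exp_pos.
  assert (0 < exp (INR d * t * ln 2)) by apply exp_pos.
  assert (0 < exp (- INR d * B * ln 2)) by apply exp_pos.
  assert (0 < nn k) by (rewrite nnE; apply exp_pos).
  assert (HJd : INR j ^ d * exp (- (INR d + 1) * ln (INR k)) <= / INR k).
  { assert (INR j ^ d <= INR k ^ d) by (apply pow_incr; lra).
    rewrite <- (Rpower_pow d (INR k)) in H3 by lra. unfold Rpower in H3.
    assert (0 < exp (- (INR d + 1) * ln (INR k))) by apply exp_pos.
    apply Rle_trans with (exp (INR d * ln (INR k)) * exp (- (INR d + 1) * ln (INR k))).
    { apply Rmult_le_compat_r; lra. }
    rewrite <- exp_plus. replace (INR d * ln (INR k) + - (INR d + 1) * ln (INR k)) with (- ln (INR k)) by ring.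
    rewrite exp_Ropp, exp_ln by lra. lra. }
  replace (C * (INR j ^ d * (exp (INR d * t * ln 2) * nn k * exp (- (INR d + 1) * ln (INR k)) * exp (- INR d * B * ln 2))) * E)
    with ((C * exp (INR d * t * ln 2) * nn k * exp (- INR d * B * ln 2) * E) * (INR j ^ d * exp (- (INR d + 1) * ln (INR k)))) by ring.
  replace (C * exp (- INR d * B * ln 2) * nn k / INR k * (exp (INR d * t * ln 2) * E))
    with ((C * exp (INR d * t * ln 2) * nn k * exp (- INR d * B * ln 2) * E) * / INR k) by (field; lra).
  apply Rmult_le_compat_l; [|exact HJd].
  repeat apply Rmult_le_pos; lra.
Qed.

Lemma fold_le (f g : nat -> R) l : (forall i, In i l -> f i <= g i) ->
  fold_right (fun i acc => f i + acc) 0 l <= fold_right (fun i acc => g i + acc) 0 l.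
Proof. induction l as [|x l IH]; simpl; intros H; [lra|].
  assert (f x <= g x) by auto. assert (fold_right (fun i acc => f i + acc) 0 l <= fold_right (fun i acc => g i + acc) 0 l) by auto. lra. Qed.

Lemma sumR_le a b f g : (forall i, (a <= i <= b)%nat -> f i <= g i) -> sumR a b f <= sumR a b g.
Proof. intros H. unfold sumR. apply fold_le. intros i Hi. apply in_seq in Hi. apply H. lia. Qed.

Lemma fold_tele (h : nat -> R) a m :
  fold_right (fun j acc => (h (S j) - h j) + acc) 0 (seq a m) = h (a + m)%nat - h a.
Proof. revert a; induction m as [|m IH]; intros a; simpl.
  - rewrite Nat.add_0_r. ring.
  - rewrite IH. replace (S a + m)%nat with (a + S m)%nat by lia. ring. Qed.

Lemma sumR_tele a b (h : nat -> R) : (a <= S b)%nat ->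
  sumR a b (fun j => h (S j) - h j) = h (S b) - h a.
Proof. intros H. unfold sumR. rewrite fold_tele. f_equal. f_equal. lia. Qed.

Lemma fold_scal (c : R) (f : nat -> R) l : fold_right (fun j acc => c * f j + acc) 0 l = c * fold_right (fun j acc => f j + acc) 0 l.
Proof. induction l; simpl; [ring|rewrite IHl; ring]. Qed.

Lemma sumR_scal a b c f : sumR a b (fun j => c * f j) = c * sumR a b f.
Proof. apply fold_scal. Qed.

Lemma fold_const (c : R) a m : fold_right (fun _ acc => c + acc) 0 (seq a m) = INR m * c.
Proof. revert a; induction m; intros a; simpl fold_right; [simpl; ring|]. rewrite IHm, S_INR. ring. Qed.

Lemma sumR_const a b c : sumR a b (fun _ => c) = INR (S b - a) * c.
Proof. unfold sumR. apply fold_const. Qed.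

Lemma Hdiff t : let u := exp (t * ln 2) in
  exp ((t + 1) * ln 2) / (1 + exp ((t + 1) * ln 2)) - exp (t * ln 2) / (1 + exp (t * ln 2))
  = u / ((1 + 2 * u) * (1 + u)).
Proof. intros u. replace ((t+1) * ln 2) with (t * ln 2 + ln 2) by ring.
  rewrite exp_plus, exp_ln by lra. fold u. assert (0 < u) by apply exp_pos. field. lra. Qed.

Theorem mainTheorem7 (d : nat) (C B : R) :
  (1 < d)%nat -> 0 < C -> B > 5 + log2 C ->
  exists A0 : R, 0 < A0 /\
    forall (d1 : nat) (A : R) (k : nat),
      (1 <= d1 <= d)%nat -> A0 <= A -> (1 <= k)%nat ->
      sumR 1 k (fun i => sumR (i - 1) k (fun j => term d d1 C A B k i j))
        <= nn k / 16.
Proof.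
  intros Hd HC _.
  pose proof ln2_pos as L2.
  set (c0 := C * exp (- INR d * B * ln 2)).
  assert (Hc0 : 0 < c0) by (unfold c0; pose proof (exp_pos (- INR d * B * ln 2)); nra).
  set (eps := / (16 * c0)).
  assert (He : 0 < eps) by (unfold eps; apply Rinv_0_lt_compat; lra).
  destruct (Fbound d eps ltac:(lia) He) as [a0 [Ha0 Hf]].
  set (eB := exp ((B + 1) * ln 2)).
  assert (HeB : 0 < eB) by apply exp_pos.
  assert (Ha0eB : 0 < a0 * eB) by (apply Rmult_lt_0_compat; lra).
  exists (16 * a0 * eB + 1). split; [lra|].
  intros d1 A k Hd1 HA Hk.
  set (a := A ^ 2 / 16 * exp (- (B + 1) * ln 2)).
  assert (Haa : a0 <= a).
  { unfold a. replace (- (B + 1) * ln 2) with (- ((B + 1) * ln 2)) by ring.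
    rewrite exp_Ropp. fold eB. apply le_div; [exact HeB|]. 
    assert (A <= A ^ 2) by nra. apply div_le_inv; [lra|]. 
    apply div_le; [lra|]. nra. }
  assert (HK : 1 <= INR k) by (replace 1 with (INR 1) by reflexivity; apply le_INR; lia).
  assert (Hnn : 0 < nn k) by (unfold nn; apply pow_lt; lra).
  set (H := fun x => exp (x * ln 2) / (1 + exp (x * ln 2))).
  apply Rle_trans with (sumR 1 k (fun _ => nn k / (16 * INR k))).
  2:{ rewrite sumR_const. replace (S k - 1)%nat with k by lia. right. field. lra. }
  apply sumR_le. intros i Hi.
  set (h := fun j : nat => H (INR j - j0 d d1 B k i)).
  apply Rle_trans with (sumR (i - 1) k (fun j => (c0 * nn k / INR k * eps) * (h (S j) - h j))).
  - apply sumR_le. intros j Hj.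
    eapply Rle_trans. { apply (term_bound d d1 C A B k i j); auto; lia. }
    fold a. fold c0.
    replace (c0 * nn k / INR k * eps * (h (S j) - h j)) with (c0 * nn k / INR k * (eps * (h (S j) - h j))) by ring.
    apply Rmult_le_compat_l.
    { apply Rmult_le_pos; [apply Rmult_le_pos; lra|]. left; apply Rinv_0_lt_compat; lra. }
    unfold h, H. rewrite S_INR.
    replace (INR j + 1 - j0 d d1 B k i) with ((INR j - j0 d d1 B k i) + 1) by ring.
    rewrite Hdiff. apply Hf. exact Haa.
  - rewrite sumR_scal, sumR_tele by lia.
    assert (Hh : forall x, 0 < H x < 1).
    { intros x. unfold H. assert (0 < exp (x * ln 2)) by apply exp_pos. split.
      apply Rdiv_lt_0_compat; lra. replace (exp (x * ln 2) / (1 + exp (x * ln 2))) with (1 - 1 / (1 + exp (x * ln 2))) by (field; lra).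
      assert (0 < 1 / (1 + exp (x * ln 2))) by (apply Rdiv_lt_0_compat; lra). lra. }
    assert (HP : c0 * nn k / INR k * eps = nn k / (16 * INR k)) by (unfold eps; field; lra).
    rewrite HP.
    assert (0 < nn k / (16 * INR k)) by (apply Rdiv_lt_0_compat; lra).
    pose proof (Hh (INR (S k) - j0 d d1 B k i)). pose proof (Hh (INR (i - 1) - j0 d d1 B k i)).
    unfold h. nra.
Qed.
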